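(* Let $G=(V,E)$ be a connected undirected graph with $n=|V|$ vertices and minimum degree $D$, let $\delta>0$, and let $T(n)$ be the $\delta$-mixing time of $G$. Consider a standard random walk on $G$. For any vertex $v$, any time index $j$, any integer $z \ge T(n)$ and any edge $e\in E$, the conditional probability, given that the walk is at vertex $v$ at time index $j$, that the walk traverses edge $e$ between time indices $j+z$ and $j+z+1$ lies between $\frac{1}{|E|} - \frac{2\delta}{D}$ and $\frac{1}{|E|}+\frac{2\delta}{D}$.
   Context: A standard random walk moves at each step to a uniformly random neighbor of the current vertex; its stationary distribution is $\mu(u)=d_u/(2|E|)$ with $d_u$ the degree of $u$. The $\delta$-mixing time is the smallest $t'$ such that, for every starting vertex, the distribution $\mu'$ of the walk's position after $t'$ steps satisfies $\|\mu-\mu'\|_\infty\le\delta$. The walk traverses edge $\{v_{i-1},v_i\}$ between time indices $i-1$ and $i$, where $v_i$ is its position at time $i$. *)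

(* Defs.v *)
From mathcomp Require Import all_boot all_order all_algebra.
Set Implicit Arguments. Unset Strict Implicit. Unset Printing Implicit Defensive.
Import Order.TTheory GRing.Theory Num.Theory.
Local Open Scope ring_scope.

(* A simple undirected graph on a finite vertex type V is given by a
   symmetric irreflexive adjacency relation adj. *)
Section RW.
Variables (R : realFieldType) (V : finType) (adj : rel V).

Definition deg (u : V) : nat := #|[set w | adj u w]|.

Definition edges : {set {set V}} :=
  [set [set uw.1; uw.2] | uw in [set uw : V * V | adj uw.1 uw.2]].

Definition trans (u w : V) : R := if adj u w then (deg u)%:R^-1 else 0.

Definition stat (u : V) : R := (deg u)%:R / (2 * #|edges|)%:R.

Definition pos (N : nat) (x : {ffun 'I_N.+1 -> V}) (k : nat) : V := x (inord k).

Definition path_prob (mu0 : V -> R) (N : nat) (x : {ffun 'I_N.+1 -> V}) : R :=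
  mu0 (pos x 0) * \prod_(i < N) trans (pos x i) (pos x i.+1).

Definition Pr (mu0 : V -> R) (N : nat) (A : {ffun 'I_N.+1 -> V} -> bool) : R :=
  \sum_(x : {ffun 'I_N.+1 -> V} | A x) path_prob mu0 x.

Definition dirac (v : V) : V -> R := fun u => (u == v)%:R.

Definition walk_dist (v : V) (t : nat) (u : V) : R :=
  Pr (dirac v) (fun x : {ffun 'I_t.+1 -> V} => pos x t == u).

Definition mixing_ok (delta : R) (t : nat) : Prop :=
  forall v u : V, `|stat u - walk_dist v t u| <= delta.

Definition is_mixing_time (delta : R) (T : nat) : Prop :=
  mixing_ok delta T /\ forall t, (t < T)%N -> ~ mixing_ok delta t.

Definition is_distribution (mu0 : V -> R) : Prop :=
  (forall u, 0 <= mu0 u) /\ \sum_u mu0 u = 1.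

End RW.

(* Main.v *)
Require Import Defs.
From mathcomp Require Import all_boot all_order all_algebra.
From mathcomp Require Import ring lra.
Import Order.TTheory GRing.Theory Num.Theory.
Local Open Scope ring_scope.
Set Implicit Arguments. Unset Strict Implicit.

Section Proofs.
Variables (R : realFieldType) (V : finType).

Fixpoint fw (mu : V -> R) (W : nat -> V -> V -> R) (k : nat) : V -> R :=
  match k with 0 => mu | k'.+1 => fun w => \sum_u fw mu W k' u * W k' u w end.

Lemma fw_sum N (mu : V -> R) (W : nat -> V -> V -> R) (g : V -> R) :
  \sum_(x : {ffun 'I_N.+1 -> V})
     (mu (pos x 0) * \prod_(i < N) W (i : nat) (pos x i) (pos x i.+1)) * g (pos x N)
  = \sum_u fw mu W N u * g u.
Proof.
elim: N g => [|N IH] g.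
  rewrite (reindex (fun u : V => [ffun _ : 'I_1 => u])) /=; last first.
    exists (fun x : {ffun 'I_1 -> V} => x ord0) => [u _|x _]; first by rewrite ffunE.
    by apply/ffunP => i; rewrite ffunE (ord1 i).
  by apply: eq_bigr => u _; rewrite /pos !ffunE big_ord0 mulr1.
pose h := fun p : {ffun 'I_N.+1 -> V} * V =>
  [ffun i : 'I_N.+2 => if (i <= N)%N then p.1 (inord i) else p.2].
pose h' := fun x : {ffun 'I_N.+2 -> V} =>
  ([ffun k : 'I_N.+1 => x (inord k)], x (inord N.+1)).
have posh1 y w k : (k <= N)%N -> pos (h (y, w)) k = pos y k.
  move=> kN; rewrite /pos /h ffunE /= inordK ?ltnS ?kN //.
  exact: leqW.
have posh2 y w : pos (h (y, w)) N.+1 = w.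
  by rewrite /pos /h ffunE /= inordK // ltnn.
rewrite (reindex h); last first.
  exists h' => [[y w] _|x _].
    rewrite /h' /=; congr pair; last exact: posh2.
    apply/ffunP => k; rewrite ffunE.
    have := posh1 y w k; rewrite /pos => ->; last by rewrite -ltnS.
    by congr (y _); apply: val_inj; rewrite /= inordK.
  apply/ffunP => i; rewrite /h /h' ffunE /=.
  case: ifP => iN.
    by rewrite ffunE; congr (x _); apply: val_inj; rewrite /= !inordK // ltnS.
  congr (x _); apply: val_inj; rewrite /= inordK //.
  have := ltn_ord i; rewrite ltnS => iN2.
  by apply/eqP; rewrite eqn_leq iN2 ltnNge iN.
rewrite -(pair_bigA _ (fun y w =>
   mu (pos (h (y, w)) 0) * \prod_(i < N.+1) W i (pos (h (y, w)) i) (pos (h (y, w)) i.+1) *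
   g (pos (h (y, w)) N.+1))) /=.
transitivity (\sum_(y : {ffun 'I_N.+1 -> V})
   mu (pos y 0) * \prod_(i < N) W i (pos y i) (pos y i.+1) *
   (fun u => \sum_w W N u w * g w) (pos y N)).
  apply: eq_bigr => y _; rewrite mulr_sumr; apply: eq_bigr => w _.
  rewrite big_ord_recr /= posh1 // posh2 posh1 //.
  rewrite (eq_bigr (fun i : 'I_N => W i (pos y i) (pos y i.+1))); last first.
    by move=> i _; rewrite !posh1 // ltnW.
  by rewrite !mulrA.
rewrite (IH (fun u => \sum_w W N u w * g w)) /=.
under eq_bigr do rewrite mulr_sumr.
rewrite exchange_big /=; apply: eq_bigr => w _.
by rewrite mulr_suml; apply: eq_bigr => u _; rewrite mulrA.
Qed.

Variable adj : rel V.
Notation tr := (trans R adj).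

Lemma Pr_fw N (mu : V -> R) (A : {ffun 'I_N.+1 -> V} -> bool) W (g : V -> R) :
  (forall x, (A x)%:R * path_prob adj mu x =
     mu (pos x 0) * \prod_(i < N) W (i : nat) (pos x i) (pos x i.+1) * g (pos x N)) ->
  Pr adj mu A = \sum_u fw mu W N u * g u.
Proof.
move=> HA; rewrite -fw_sum /Pr big_mkcond /=; apply: eq_bigr => x _.
by rewrite -HA; case: (A x); rewrite ?mul1r ?mul0r.
Qed.

Lemma prod_if N k (F : nat -> R) : (k < N)%N ->
  \prod_(i < N) (if (i : nat) == k then F i else 1) = F k.
Proof.
move=> kN; rewrite (bigD1 (Ordinal kN)) //= eqxx big1 ?mulr1 // => i.
by rewrite -val_eqE /= => /negbTE ->.
Qed.

Lemma sum_dirac (f : V -> R) u : \sum_w f w * dirac R w u = f u.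
Proof.
rewrite (bigD1 u) //= big1 /dirac ?eqxx ?mulr1 ?addr0 // => w.
by rewrite eq_sym => /negbTE ->; rewrite mulr0.
Qed.

Definition q (mu : V -> R) t := fw mu (fun _ => tr) t.

Lemma walk_q v t u : walk_dist R adj v t u = q (dirac R v) t u.
Proof.
rewrite /walk_dist (Pr_fw (W := fun _ => tr) (g := fun w => (w == u)%:R)).
  by rewrite -(sum_dirac (q (dirac R v) t) u); apply: eq_bigr => w _; rewrite /dirac eq_sym.
by move=> x; rewrite /path_prob mulrC -mulrA.
Qed.

Lemma q_comp mu s t u : q mu (s + t) u = \sum_w q mu s w * q (dirac R w) t u.
Proof.
elim: t u => [|t IH] u.
  by rewrite addn0 /= -{1}(sum_dirac (q mu s) u) /q /=; apply: eq_bigr => w _; rewrite /dirac.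
rewrite addnS /q /= -/(q mu (s + t)).
under eq_bigr do rewrite IH mulr_suml.
rewrite exchange_big /=; apply: eq_bigr => w _.
by rewrite mulr_sumr; apply: eq_bigr => x _; rewrite mulrA.
Qed.

Lemma tr_ge0 u w : 0 <= tr u w.
Proof. by rewrite /trans; case: ifP => // _; rewrite invr_ge0 ler0n. Qed.

Lemma tr_sum u : (0 < deg adj u)%N -> \sum_w tr u w = 1.
Proof.
move=> du; rewrite /trans -big_mkcond /= sumr_const.
have -> : #|[pred w | adj u w]| = deg adj u by rewrite /deg cardsE.
have dR : (deg adj u)%:R != 0 :> R by rewrite pnatr_eq0 -lt0n.
by rewrite -[RHS](mulVf dR) mulr_natr.
Qed.

Lemma q_ge0 mu t u : (forall u, 0 <= mu u) -> 0 <= q mu t u.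
Proof.
move=> h; elim: t u => [|t IH] u //=.
by apply: sumr_ge0 => w _; apply: mulr_ge0; [apply: IH | apply: tr_ge0].
Qed.

Lemma q_sum mu t : (forall u, (0 < deg adj u)%N) -> \sum_u q mu t u = \sum_u mu u.
Proof.
move=> hd; elim: t => [|t IH] //=.
rewrite -IH exchange_big /=; apply: eq_bigr => u _.
by rewrite -mulr_sumr tr_sum // mulr1.
Qed.


Definition Wf j z v (P : V -> V -> bool) (i : nat) (u w : V) : R :=
  (if i == j then (u == v)%:R else 1) * tr u w * (if i == j + z then (P u w)%:R else 1).

Lemma Pr_filt mu j z v P :
  Pr adj mu (fun x : {ffun 'I_(j+z).+2 -> V} =>
     (pos x j == v) && P (pos x (j+z)) (pos x (j+z).+1))
  = \sum_u fw mu (Wf j z v P) (j+z).+1 u.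
Proof.
rewrite (Pr_fw (W := Wf j z v P) (g := fun _ => 1)); last first.
  move=> x; rewrite mulr1 /path_prob /Wf !big_split /=.
  rewrite (prod_if (fun i => (pos x i == v)%:R)) ?ltnS ?leq_addr //.
  rewrite (prod_if (fun i => (P (pos x i) (pos x i.+1))%:R)) //.
  rewrite -mulnb natrM.
  set a := (_ == v)%:R; set b := (P _ _)%:R; set c := mu _; set d := \prod_(i < _) _.
  by ring.
by apply: eq_bigr => u _; rewrite mulr1.
Qed.

Lemma sum_pick (f : V -> R) v : \sum_u (u == v)%:R * f u = f v.
Proof.
rewrite (bigD1 v) //= big1 ?eqxx ?mul1r ?addr0 // => w /negbTE ->.
by rewrite mul0r.
Qed.

Lemma fw_filt_pre mu j z v P k : (k <= j)%N -> forall u,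
  fw mu (Wf j z v P) k u = q mu k u.
Proof.
elim: k => [|k IH] kj u //=.
apply: eq_bigr => w _; rewrite IH ?(ltnW kj) // /Wf.
have -> : (k == j) = false by rewrite ltn_eqF.
have -> : (k == j + z) = false by rewrite ltn_eqF // (leq_trans kj) ?leq_addr.
by rewrite mul1r mulr1.
Qed.

Lemma fw_filt mu j z v P m : (m <= z)%N -> forall w,
  fw mu (Wf j z v P) (j+m).+1 w = q mu j v *
    \sum_u q (dirac R v) m u * tr u w * (if m == z then (P u w)%:R else 1).
Proof.
elim: m => [|m IH] mz w.
  rewrite addn0 /=.
  under eq_bigr do rewrite fw_filt_pre // /Wf eqxx (mulrC (fw _ _ _ _)) -!mulrA.
  rewrite sum_pick -/(q mu j v).
  have -> : (j == j + z) = (0 == z) by rewrite -{1}(addn0 j) eqn_add2l.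
  have -> : \sum_u q (dirac R v) 0 u * tr u w * (if 0%N == z then (P u w)%:R else 1)
     = tr v w * (if 0%N == z then (P v w)%:R else 1).
    rewrite -(sum_pick (fun u => tr u w * (if 0%N == z then (P u w)%:R else 1)) v).
    by apply: eq_bigr => u _; rewrite /q /dirac /= mulrA.
  by rewrite mulrA mulrC.
transitivity (\sum_u fw mu (Wf j z v P) (j+m).+1 u * Wf j z v P (j+m).+1 u w);
  first by rewrite addnS.
under eq_bigr do rewrite IH ?(ltnW mz) //.
have -> : (m == z) = false by rewrite ltn_eqF.
rewrite /Wf.
have -> : ((j + m).+1 == j) = false by rewrite gtn_eqF // ltnS leq_addr.
have -> : ((j + m).+1 == j + z) = (m.+1 == z) by rewrite -addnS eqn_add2l.
rewrite mulr_sumr; apply: eq_bigr => u _.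
rewrite mul1r -mulrA; congr (_ * _); rewrite !mulrA; congr (_ * _ * _).
by apply: eq_bigr => x _; rewrite mulr1.
Qed.


Lemma set2_eq (u w a b : V) : u != w -> a != b ->
  ([set u; w] == [set a; b]) = ((u == a) && (w == b)) || ((u == b) && (w == a)).
Proof.
move=> uw ab; apply/idP/idP.
  move/eqP=> E.
  have : w \in [set a; b] by rewrite -E set22.
  have : u \in [set a; b] by rewrite -E set21.
  rewrite !inE => /orP[]/eqP Hu /orP[]/eqP Hw; subst u w; rewrite ?eqxx ?orbT //.
    by rewrite eqxx in uw.
  by rewrite eqxx in uw.
by case/orP=> /andP[/eqP-> /eqP->] //; rewrite setUC.
Qed.

Lemma sum2_pick (F : V -> V -> R) a b :
  \sum_w \sum_u F u w * ((u == a) && (w == b))%:R = F a b.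
Proof.
transitivity (\sum_w (w == b)%:R * \sum_u (u == a)%:R * F u w).
  apply: eq_bigr => w _; rewrite mulr_sumr; apply: eq_bigr => u _.
  by rewrite -mulnb natrM; ring.
under eq_bigr do rewrite sum_pick.
by rewrite sum_pick.
Qed.

Lemma half_bound (x d Dr E dl : R) : 0 < Dr -> Dr <= d -> 0 < E ->
  0 <= dl -> `|d / (2 * E) - x| <= dl -> `|x / d - (2 * E)^-1| <= dl / Dr.
Proof.
move=> Dp Dd Ep dp H.
have dpos : 0 < d by apply: lt_le_trans Dd.
have -> : x / d - (2 * E)^-1 = (x - d / (2 * E)) / d.
  by field; rewrite gt_eqF //; lra.
rewrite normrM (gtr0_norm (x := d^-1)) ?invr_gt0 // distrC.
apply: (le_trans (y := dl / d)); first by rewrite ler_wpM2r // invr_ge0 ltW.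
by rewrite ler_wpM2l // lef_pV2 // posrE.
Qed.


Lemma dirac_ge0 (v u : V) : 0 <= dirac R v u.
Proof. by rewrite /dirac ler0n. Qed.

Lemma sum_dirac1 (v : V) : \sum_u dirac R v u = 1.
Proof.
rewrite -[RHS](sum_pick (fun _ => 1) v).
by apply: eq_bigr => u _; rewrite mulr1.
Qed.

Lemma mix_z dl T (v : V) z u : (forall u, (0 < deg adj u)%N) -> mixing_ok adj dl T ->
  (T <= z)%N -> `|stat R adj u - q (dirac R v) z u| <= dl.
Proof.
move=> hd hm Tz; rewrite -(subnK Tz) q_comp.
have s1 : \sum_w q (dirac R v) (z - T) w = 1.
  rewrite q_sum // -(sum_pick (fun _ => 1) v) /=.
  by apply: eq_bigr => w _; rewrite mulr1.
have -> : stat R adj u = \sum_w q (dirac R v) (z - T) w * stat R adj u.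
  by rewrite -mulr_suml s1 mul1r.
rewrite -sumrB; apply: le_trans (ler_norm_sum _ _ _) _.
apply: (le_trans (y := \sum_w q (dirac R v) (z - T) w * dl)); last first.
  by rewrite -mulr_suml s1 mul1r.
apply: ler_sum => w _; rewrite -mulrBr normrM ger0_norm; last first.
  by apply: q_ge0 => x; apply: dirac_ge0.
apply: ler_wpM2l; first by apply: q_ge0 => x; apply: dirac_ge0.
by have := hm w u; rewrite walk_q.
Qed.

End Proofs.

Unset Implicit Arguments.
Set Strict Implicit.
Theorem lemma1 (R : realFieldType) (V : finType) (adj : rel V)
  (adj_sym : symmetric adj) (adj_irr : irreflexive adj)
  (conn : forall u w : V, connect adj u w)
  (D : nat) (hDmin : forall u : V, (D <= deg adj u)%N)
  (hDatt : exists u : V, deg adj u = D)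
  (delta : R) (hdelta : 0 < delta)
  (T : nat) (hT : is_mixing_time adj delta T)
  (mu0 : V -> R) (hmu0 : is_distribution mu0)
  (v : V) (j z : nat) (hz : (T <= z)%N)
  (e : {set V}) (he : e \in edges adj)
  (hpos : 0 < Pr adj mu0 (fun x : {ffun 'I_(j + z).+2 -> V} => pos x j == v)) :
  let p :=
    Pr adj mu0 (fun x : {ffun 'I_(j + z).+2 -> V} =>
              (pos x j == v) && ([set pos x (j + z); pos x (j + z).+1] == e))
    / Pr adj mu0 (fun x : {ffun 'I_(j + z).+2 -> V} => pos x j == v) in
  (#|edges adj|%:R)^-1 - 2 * delta / D%:R <= p /\
  p <= (#|edges adj|%:R)^-1 + 2 * delta / D%:R.
Proof.
move=> p.
have he' := he.
case/imsetP: he' => [[a b]]; rewrite inE /= => hab Ee.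
have ab : a != b by apply/eqP => Eab; rewrite Eab adj_irr in hab.
have hdeg : forall u, (0 < deg adj u)%N.
  move=> u; rewrite /deg; apply/card_gt0P.
  case: (eqVneq u a) => [->|ua]; first by exists b; rewrite inE.
  have /connectP [[|x pp] pth lst] := conn u a; first by rewrite /= in lst; rewrite lst eqxx in ua.
  by exists x; rewrite inE; case/andP: pth.
set c := q adj mu0 j v.
set qz := q adj (dirac R v) z.
set S := \sum_w \sum_u qz u * trans R adj u w * ([set u; w] == e)%:R.
have Hnum : Pr adj mu0 (fun x : {ffun 'I_(j + z).+2 -> V} =>
              (pos x j == v) && ([set pos x (j + z); pos x (j + z).+1] == e)) = c * S.
  rewrite (Pr_filt adj mu0 j z v (fun u w => [set u; w] == e)).
  by rewrite mulr_sumr; apply: eq_bigr => w _; rewrite fw_filt // eqxx.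
have Hden : Pr adj mu0 (fun x : {ffun 'I_(j + z).+2 -> V} => pos x j == v) = c.
  transitivity (Pr adj mu0 (fun x : {ffun 'I_(j + z).+2 -> V} => (pos x j == v) &&
     (fun _ _ => true) (pos x (j+z)) (pos x (j+z).+1))).
    by apply: eq_bigl => x; rewrite andbT.
  rewrite (Pr_filt adj mu0 j z v (fun _ _ => true)); under eq_bigr do rewrite fw_filt // eqxx.
  rewrite -mulr_sumr exchange_big /=.
  have -> : \sum_u \sum_w qz u * trans R adj u w * (true%:R : R) = \sum_u qz u.
    apply: eq_bigr => u _; rewrite -[RHS]mulr1 -[in RHS](@tr_sum R V adj u (hdeg u)) mulr_sumr.
    by apply: eq_bigr => w _; rewrite mulr1.
  by rewrite q_sum // sum_dirac1 mulr1.
have cp : 0 < c by rewrite -Hden.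
have -> : p = S by rewrite /p Hnum Hden mulrC mulKf // gt_eqF.
have HS : S = qz a * (deg adj a)%:R^-1 + qz b * (deg adj b)%:R^-1.
  have orN : forall x y : bool, ~~ (x && y) -> (x || y)%:R = x%:R + y%:R :> R.
    by case; case; rewrite /= ?addr0 ?add0r.
  rewrite /S Ee.
  transitivity (\sum_w \sum_u ((qz u * trans R adj u w) * ((u == a) && (w == b))%:R +
                               (qz u * trans R adj u w) * ((u == b) && (w == a))%:R)).
    apply: eq_bigr => w _; apply: eq_bigr => u _.
    case huw : (adj u w); last by rewrite /trans huw !mulr0 !mul0r addr0.
    rewrite -mulrDr; congr (_ * _).
    have uw : u != w by apply/eqP => E; rewrite E adj_irr in huw.
    rewrite set2_eq // orN //; apply/negP => /andP[/andP[/eqP ua _] /andP[/eqP ub _]].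
    by move: ab; rewrite -ua ub eqxx.
  under eq_bigr do rewrite big_split /=.
  rewrite big_split /= !sum2_pick /trans hab.
  by rewrite adj_sym hab.
have Dp : 0 < D%:R :> R by case: hDatt => u0 <-; rewrite ltr0n hdeg.
have Ep : 0 < #|edges adj|%:R :> R by rewrite ltr0n; apply/card_gt0P; exists e.
have Mx : forall u, `|stat R adj u - qz u| <= delta.
  by move=> u; apply: mix_z hdeg hT.1 hz.
have Hst x : stat R adj x = (deg adj x)%:R / (2 * #|edges adj|%:R) by rewrite /stat natrM.
have HDa : D%:R <= (deg adj a)%:R :> R by rewrite ler_nat.
have HDb : D%:R <= (deg adj b)%:R :> R by rewrite ler_nat.
have Ma := Mx a; rewrite Hst in Ma.
have Mb := Mx b; rewrite Hst in Mb.
have Ha := half_bound Dp HDa Ep (ltW hdelta) Ma.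
have Hb := half_bound Dp HDb Ep (ltW hdelta) Mb.
have E2 : #|edges adj|%:R^-1 = 2 * (2 * #|edges adj|%:R)^-1 :> R.
  by rewrite invfM mulrA mulfV ?mul1r // pnatr_eq0.
rewrite HS E2 -(mulrA 2 delta); move: Ha Hb; rewrite !ler_norml => /andP[H1 H2] /andP[H3 H4].
split; lra.
Qed.
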